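(* Let $\mathcal{M}=(E,\mathcal{I})$ be a matroid with $|E|=n$ whose ground set is dependent, and suppose we are given real numbers $\widehat{q}_T$ for all $T\subseteq E$ with $|\widehat{q}_T-q_{T,\mathcal{M}}|\le 1/n^2$. Run the following procedure: set $S\leftarrow E$; while there exists a nonempty $T\subseteq S$ with $\widehat{q}_S-\widehat{q}_{S\setminus T}\le \frac{|T|}{2^{20}|S|\log n}$, pick any such $T$ and set $S\leftarrow S\setminus T$; finally output $S$. Then, for all sufficiently large $n$, the output $S$ is nonempty and globally optimal in $\mathcal{M}$, i.e. $q_{S,\mathcal{M}}\ge 1-2^{-20}$ and $p_{T,\mathcal{M}|_S}\ge \frac{|T|}{2^{21}|S|\log n}$ for every $T\subseteq S$.
   Context: $\log$ denotes the base-2 logarithm. For a matroid $\mathcal{N}$ whose ground set $F$ is dependent and a permutation $\pi$ of $F$, $C_\pi$ denotes the first circuit formed when adding elements in the order of $\pi$ (the unique circuit contained in the shortest dependent prefix of $\pi$). For $T\subseteq F$, $p_{T,\mathcal{N}}=\Pr_\pi[C_\pi\cap T\neq\emptyset]$ and $q_{T,\mathcal{N}}=\Pr_\pi[C_\pi\subseteq T]$, with $\pi$ uniformly random over permutations of $F$. $\mathcal{M}|_S$ is the restriction of $\mathcal{M}$ to $S$. A set $S\subseteq E$ is globally optimal in $\mathcal{M}$ (with $n=|E|$) if $q_{S,\mathcal{M}}\ge 1-2^{-20}$ and $p_{T,\mathcal{M}|_S}\ge \frac{|T|}{2^{21}|S|\log n}$ for all $T\subseteq S$. *)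

(* Defs.v *)
From Stdlib Require Import Reals.
From mathcomp Require Import all_boot.
Set Implicit Arguments. Unset Strict Implicit. Unset Printing Implicit Defensive.
Local Open Scope R_scope.

Record matroid (T : finType) := Matroid {
  ground : {set T};
  indep : {set T} -> bool }.

Definition is_matroid (T : finType) (M : matroid T) : Prop :=
  [/\ indep M set0,
      (forall I : {set T}, indep M I -> I \subset ground M),
      (forall I J : {set T}, J \subset I -> indep M I -> indep M J) &
      (forall I J : {set T}, indep M I -> indep M J -> (#|I| < #|J|)%N ->
         exists2 x, x \in J :\: I & indep M (x |: I))].

Definition restrict (T : finType) (M : matroid T) (S : {set T}) : matroid T :=
  Matroid S (fun I => indep M I && (I \subset S)).

Definition circuit (T : finType) (M : matroid T) (C : {set T}) : bool :=
  [&& C \subset ground M, ~~ indep M C &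
      [forall x in C, indep M (C :\ x)]].

Definition prefix_set (T : finType) (s : seq T) (k : nat) : {set T} :=
  [set x in take k s].

Definition first_dep (T : finType) (M : matroid T) (s : seq T) : nat :=
  find (fun k => ~~ indep M (prefix_set s k)) (iota 0 (size s).+1).

(* C_pi: the (unique) circuit contained in the shortest dependent prefix. *)
Definition first_circuit (T : finType) (M : matroid T) (s : seq T) : {set T} :=
  odflt set0 [pick C | circuit M C && (C \subset prefix_set s (first_dep M s))].

Definition orderings (T : finType) (M : matroid T) : seq (seq T) :=
  permutations (enum (ground M)).

Definition prob_perm (T : finType) (M : matroid T) (P : seq T -> bool) : R :=
  (INR (count P (orderings M)) / INR (size (orderings M)))%R.

Definition p_of (T : finType) (X : {set T}) (M : matroid T) : R :=
  prob_perm M (fun s => first_circuit M s :&: X != set0).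

Definition q_of (T : finType) (X : {set T}) (M : matroid T) : R :=
  prob_perm M (fun s => first_circuit M s \subset X).

Definition log2 (x : R) : R := (ln x / ln 2)%R.

Definition globally_optimal (T : finType) (M : matroid T) (S : {set T}) : Prop :=
  let n := #|ground M| in
  (q_of S M >= 1 - / 2 ^ 20)%R /\
  forall X : {set T}, X \subset S ->
    (p_of X (restrict M S) >= INR #|X| / (2 ^ 21 * INR #|S| * log2 (INR n)))%R.

Definition removable (T : finType) (n : nat) (qhat : {set T} -> R)
    (S X : {set T}) : Prop :=
  [/\ X \subset S, X != set0 &
      (qhat S - qhat (S :\: X) <= INR #|X| / (2 ^ 20 * INR #|S| * log2 (INR n)))%R].

Inductive reachable (T : finType) (n : nat) (qhat : {set T} -> R) (E : {set T})
  : {set T} -> Prop :=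
| reach_start : reachable n qhat E E
| reach_step S X : reachable n qhat E S -> removable n qhat S X ->
    reachable n qhat E (S :\: X).

Definition procedure_output (T : finType) (n : nat) (qhat : {set T} -> R)
    (E S : {set T}) : Prop :=
  reachable n qhat E S /\ forall X : {set T}, ~ removable n qhat S X.

(* Main.v *)
Require Import Defs.
From Stdlib Require Import Reals Lra.
From mathcomp Require Import all_boot zify.
Set Implicit Arguments. Unset Strict Implicit. Unset Printing Implicit Defensive.


Definition ins (T : Type) (i : nat) (x : T) (t : seq T) := take i t ++ x :: drop i t.

Lemma rem_cat_mid (T : eqType) (x : T) l1 l2 : x \notin l1 -> rem x (l1 ++ x :: l2) = l1 ++ l2.
Proof.
elim: l1 => [|y l1 IH] /=; first by rewrite eqxx.
rewrite in_cons negb_or => /andP [ne nl]; rewrite eq_sym (negbTE ne) IH //.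
Qed.

Lemma rem_ins (T : eqType) i (x : T) t : x \notin t -> rem x (ins i x t) = t.
Proof.
move=> xt; rewrite /ins rem_cat_mid ?cat_take_drop //.
by apply: contra xt; apply: mem_take.
Qed.

Lemma index_ins (T : eqType) i (x : T) t : x \notin t -> i <= size t -> index x (ins i x t) = i.
Proof.
move=> xt it; rewrite /ins index_cat.
have xt' : x \notin take i t by apply: contra xt; apply: mem_take.
by rewrite (negbTE xt') /= eqxx addn0 size_takel.
Qed.

Lemma perms_ins (T : eqType) (x : T) s : x \notin s ->
  perm_eq (permutations (x :: s))
    [seq ins i x t | t <- permutations s, i <- iota 0 (size t).+1].
Proof.
move=> xs; apply/uniq_perm; first exact: permutations_uniq.
  apply/allpairs_uniq_dep; first exact: permutations_uniq.
    by move=> t _; apply: iota_uniq.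
  move=> [t i] [u j] /allpairsPdep [t1 [i1 [t1P i1P E1]]] /allpairsPdep [u1 [j1 [u1P j1P E2]]] /=.
  case: E1 => -> ->; case: E2 => -> -> /= E.
  move: t1P u1P; rewrite !mem_permutations => pt pu.
  have xt : x \notin t1 by rewrite (perm_mem pt).
  have xu : x \notin u1 by rewrite (perm_mem pu).
  move: i1P j1P; rewrite !mem_iota /= !add0n !ltnS => i1s j1s.
  have ei : i1 = j1 by rewrite -(index_ins xt i1s) E index_ins.
  have et : t1 = u1 by rewrite -(rem_ins i1 xt) E rem_ins.
  by rewrite et ei.
move=> u; rewrite mem_permutations; apply/idP/allpairsPdep.
  move=> pu.
  have xu : x \in u by rewrite (perm_mem pu) mem_head.
  exists (rem x u), (index x u); split.
  - rewrite mem_permutations -(perm_cons x); apply: perm_trans pu.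
    by rewrite perm_sym perm_to_rem.
  - rewrite mem_iota /= add0n size_rem // ltnS.
    have : index x u < size u by rewrite index_mem.
    by case: (size u) => //.
  - rewrite /ins remE.
    have iu : index x u < size u by rewrite index_mem.
    have sz : size (take (index x u) u) = index x u by rewrite size_takel // ltnW.
    rewrite (take_size_cat _ sz) (drop_size_cat _ sz).
    have E : drop (index x u) u = x :: drop (index x u).+1 u by rewrite (drop_nth x iu) nth_index.
    by rewrite -E cat_take_drop.
move=> [t [i [tP iP ->]]]; move: tP; rewrite mem_permutations => pt.
rewrite /ins -(perm_cons x) in pt.
apply: perm_trans _ pt.
by rewrite /ins -cat1s (perm_catCA (take i t) [:: x] (drop i t)) /= cat_take_drop.
Qed.

Lemma filter_ins (T : eqType) (a : pred T) i x (t : seq T) : ~~ a x ->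
  filter a (ins i x t) = filter a t.
Proof.
by move=> ax; rewrite /ins filter_cat /= (negbTE ax) -filter_cat cat_take_drop.
Qed.

Lemma count_perms_cons (T : eqType) (a : pred T) (P : seq T -> bool) x s :
  x \notin s -> ~~ a x ->
  count (fun t => P (filter a t)) (permutations (x :: s)) =
  (size s).+1 * count (fun t => P (filter a t)) (permutations s).
Proof.
move=> xs ax; rewrite (permP (perms_ins xs)).
have : forall t, t \in permutations s -> size t = size s.
  by move=> t; rewrite mem_permutations => /perm_size.
elim: (permutations s) => [|t l IH] Hs /=; first by rewrite muln0.
rewrite count_cat IH; last by move=> u ul; apply: Hs; rewrite in_cons ul orbT.
rewrite Hs ?mem_head // count_map.
rewrite (eq_count (a2 := fun _ => P (filter a t))); last first.
  by move=> i /=; rewrite filter_ins.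
rewrite filter_ins //.
case: (P (filter a t)).
  rewrite count_predT size_iota /=; set c := count _ l; rewrite mulnS; change (1 + (size s + (size s).+1 * c) = (size s).+1 + (size s).+1 * c); by rewrite addnA add1n.
by rewrite count_pred0 /= !add0n.
Qed.

Lemma count_perms_cat (T : eqType) (a : pred T) (P : seq T -> bool) r s :
  uniq (r ++ s) -> all (fun x => ~~ a x) r ->
  count (fun t => P (filter a t)) (permutations (r ++ s)) * (size s)`! =
  count (fun t => P (filter a t)) (permutations s) * (size (r ++ s))`!.
Proof.
elim: r => [|x r IH] //= /andP [xrs urs] /andP [ax ar].
rewrite count_perms_cons // factS -mulnA IH // mulnCA.
by [].
Qed.

Lemma orderings_filter_count (T : finType) (M : matroid T) (S : {set T})
    (P : seq T -> bool) :
  S \subset ground M ->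
  count (fun t => P (filter (fun x => x \in S) t)) (orderings M) * #|S|`! =
  count P (permutations (enum S)) * #|ground M|`!.
Proof.
move=> SG.
set r := enum (ground M :\: S); set s := enum S.
have urs : uniq (r ++ s).
  rewrite cat_uniq !enum_uniq /= andbT.
  by apply/hasPn => x; rewrite !mem_enum => xS; rewrite in_setD xS.
have pe : perm_eq (enum (ground M)) (r ++ s).
  apply: uniq_perm; [exact: enum_uniq | exact: urs |].
  move=> x; rewrite mem_cat !mem_enum in_setD.
  case xS: (x \in S) => /=.
  by rewrite (subsetP SG).
  by rewrite orbF.
have ar : all (fun x => ~~ (x \in S)) r.
  by apply/allP => x; rewrite mem_enum in_setD => /andP [].
rewrite /orderings (permP (perm_permutations pe)).
rewrite cardE -/s (count_perms_cat P urs ar).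
rewrite cardE (perm_size pe); congr (_ * _).
apply: eq_in_count => t; rewrite mem_permutations => pt.
congr P; apply/all_filterP/allP => x; rewrite (perm_mem pt) mem_enum //.
Qed.


Lemma m_ind0 (T : finType) (M : matroid T) : is_matroid M -> indep M set0.
Proof. by case. Qed.
Lemma m_sub (T : finType) (M : matroid T) (I : {set T}) : is_matroid M -> indep M I -> I \subset ground M.
Proof. by case=> _ H _ _; apply: H. Qed.
Lemma m_her (T : finType) (M : matroid T) (I J : {set T}) : is_matroid M -> J \subset I -> indep M I -> indep M J.
Proof. by case=> _ _ H _; apply: H. Qed.
Lemma m_aug (T : finType) (M : matroid T) (I J : {set T}) : is_matroid M -> indep M I -> indep M J ->
  #|I| < #|J| -> exists2 x, x \in J :\: I & indep M (x |: I).
Proof. by case=> _ _ _ H; apply: H. Qed.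

Lemma circuit_exists (T : finType) (M : matroid T) (D : {set T}) : is_matroid M ->
  D \subset ground M -> ~~ indep M D -> exists C, circuit M C && (C \subset D).
Proof.
move=> HM.
suff H : forall k (D : {set T}), #|D| <= k -> D \subset ground M -> ~~ indep M D ->
  exists C, circuit M C && (C \subset D) by apply: H (leqnn _).
elim=> [|k IH] {}D.
  rewrite leqn0 cards_eq0 => /eqP -> _; by rewrite m_ind0.
move=> Dk DG ID.
case: (boolP [forall x in D, indep M (D :\ x)]) => H.
  by exists D; rewrite /circuit DG ID H subxx.
move: H; rewrite negb_forall_in => /existsP [x /andP [xD Ix]].
have [|||C /andP [cC CD]] := IH (D :\ x).
- by rewrite -ltnS (leq_trans _ Dk) // (cardsD1 x D) xD.
- by apply: subset_trans DG; apply: subD1set.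
- exact: Ix.
by exists C; rewrite cC (subset_trans CD) ?subD1set.
Qed.

Lemma circuit_neq0 (T : finType) (M : matroid T) (C : {set T}) : is_matroid M -> circuit M C -> C != set0.
Proof.
move=> HM /and3P [_ IC _]; apply: contraNneq IC => ->; exact: m_ind0.
Qed.

Lemma aug_iter (T : finType) (M : matroid T) (I : {set T}) : is_matroid M -> indep M I ->
  forall J : {set T}, indep M J -> #|J| <= #|I| ->
  exists J' : {set T}, [/\ J \subset J', J' \subset J :|: I, indep M J' & #|J'| = #|I|].
Proof.
move=> HM II.
suff H : forall d (J : {set T}), #|I| - #|J| = d -> indep M J -> #|J| <= #|I| ->
  exists J' : {set T}, [/\ J \subset J', J' \subset J :|: I, indep M J' & #|J'| = #|I|].
  by move=> J; apply: H.
elim=> [|d IH] J.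
  move=> /eqP; rewrite subn_eq0 => JI IJ JI2; exists J; split => //.
  - exact: subsetUl.
  - by apply/eqP; rewrite eqn_leq JI JI2.
move=> dJ IJ JI.
have lt : #|J| < #|I| by rewrite -subn_gt0 dJ.
have [x xIJ Ix] := m_aug HM IJ II lt.
move: xIJ; rewrite in_setD => /andP [xJ xI].
have cx : #|x |: J| = #|J|.+1 by rewrite cardsU1 xJ.
have [|||J' [s1 s2 s3 s4]] := IH (x |: J).
- by rewrite cx subnS dJ.
- exact: Ix.
- by rewrite cx.
exists J'; split => //.
- by apply: subset_trans s1; apply: subsetUr.
- apply: (subset_trans s2); apply/subsetP => y; rewrite !in_setU in_set1.
  by case/orP => [/orP [/eqP -> | ->] | ->]; rewrite ?xI ?orbT.
Qed.

Lemma unique_circuit (T : finType) (M : matroid T) (I : {set T}) e (C1 C2 : {set T}) : is_matroid M ->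
  indep M I -> circuit M C1 -> circuit M C2 ->
  C1 \subset e |: I -> C2 \subset e |: I -> C1 = C2.
Proof.
move=> HM II cC1 cC2 s1 s2.
have c1 := cC1; have c2 := cC2.
move: c1 c2 => /and3P [_ D1 F1] /and3P [_ D2 F2].
apply/eqP; apply/negPn/negP => ne.
have [f fC1 fC2] : exists2 f, f \in C1 & f \notin C2.
  case: (boolP (C1 \subset C2)) => sub; last first.
    by move: sub => /subsetPn [f ? ?]; exists f.
  have : ~~ (C2 \subset C1).
    by apply: contra ne => sub2; apply/eqP; apply/setP/subset_eqP/andP.
  move=> /subsetPn [x xC2 xC1].
  have : indep M (C2 :\ x) by move/forall_inP: F2; apply.
  move=> /(m_her HM (_ : C1 \subset C2 :\ x)) H.
  by exfalso; move: D1; rewrite H //; apply/subsetP => y yC1; rewrite in_setD1 (subsetP sub) // andbT; apply: contraNneq xC1 => <-.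
have If : indep M (C1 :\ f) by move/forall_inP: F1; apply.
have cardC1 : #|C1 :\ f| <= #|I|.
  have := subset_leq_card s1; rewrite (cardsD1 f C1) fC1 cardsU1 add1n.
  by case: (e \in I) => /=; [move=> h; apply: leq_trans h; rewrite leqnSn | rewrite ltnS].
have [J' [t1 t2 t3 t4]] := aug_iter HM II If cardC1.
have fJ : f \notin J'.
  apply: contra D1 => fJ; apply: (m_her HM _ t3).
  apply/subsetP => y yC1; case: (y =P f) => [-> //|/eqP yf].
  by apply: (subsetP t1); rewrite in_setD1 yf.
have sJ : J' \subset (e |: I) :\ f.
  apply/subsetP => y yJ; rewrite in_setD1; apply/andP; split.
    by apply: contraNneq fJ => <-.
  move: (subsetP t2 y yJ); rewrite in_setU => /orP [/setD1P [_ /(subsetP s1)] //|].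
  by rewrite in_setU1 => ->; rewrite orbT.
have eqJ : J' = (e |: I) :\ f.
  apply/eqP; rewrite eqEcard sJ t4 /=.
  have fe : f \in e |: I by apply: (subsetP s1).
  have h := cardsD1 f (e |: I); rewrite fe add1n in h.
  have h2 := cardsU1 e I; rewrite h in h2.
  by rewrite -ltnS h2; case: (e \in I).
have : indep M C2.
  apply: (m_her HM _ t3); rewrite eqJ; apply/subsetP => y yC2.
  by rewrite in_setD1 (subsetP s2) // andbT; apply: contraNneq fC2 => <-.
by rewrite (negbTE D2).
Qed.


Lemma fc_spec (T : finType) (M : matroid T) (s : seq T) : is_matroid M ->
  [set x in s] \subset ground M -> ~~ indep M [set x in s] ->
  [/\ 0 < first_dep M s, first_dep M s <= size s,
      indep M (prefix_set s (first_dep M s).-1),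
      ~~ indep M (prefix_set s (first_dep M s)) &
      [/\ circuit M (first_circuit M s),
      first_circuit M s \subset prefix_set s (first_dep M s) &
      forall C, circuit M C -> C \subset prefix_set s (first_dep M s) ->
        C = first_circuit M s]].
Proof.
move=> HM sG sD.
set Q := fun k => ~~ indep M (prefix_set s k).
have Qs : Q (size s) by rewrite /Q /prefix_set take_size.
have hasQ : has Q (iota 0 (size s).+1).
  apply/hasP; exists (size s) => //; by rewrite mem_iota add0n ltnS leqnn.
have fl : first_dep M s < (size s).+1.
  by rewrite /first_dep -/Q -[X in _ < X](size_iota 0) -has_find.
have Qk : Q (first_dep M s).
  by have := nth_find 0 hasQ; rewrite nth_iota // add0n.
have before : forall j, j < first_dep M s -> indep M (prefix_set s j).
  move=> j jk; have := before_find 0 jk; rewrite nth_iota ?add0n.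
    by move/negbFE.
  exact: ltn_trans jk fl.
have k0 : 0 < first_dep M s.
  rewrite lt0n; apply/eqP => k0; move: Qk; rewrite k0 /Q /prefix_set take0.
  have -> : [set x in [::]] = set0 :> {set T} by apply/setP => x; rewrite !inE.
  by rewrite m_ind0.
set k := first_dep M s in k0 fl Qk before *.
have pG : prefix_set s k \subset ground M.
  apply: subset_trans sG; apply/subsetP => x; rewrite !inE; exact: mem_take.
have Ik1 : indep M (prefix_set s k.-1) by apply: before; rewrite prednK ?leqnn.
have [x0 _] : exists x0 : T, true.
  by case: s sD {Q Qs hasQ fl Qk before k0 pG Ik1 sG k} => [|x ?]; [rewrite -/(set0 : {set T}) ?m_ind0 |exists x].
have pk : prefix_set s k = nth x0 s k.-1 |: prefix_set s k.-1.
  rewrite /prefix_set -{1}(prednK k0) (take_nth x0); last by rewrite prednK.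
  by apply/setP => y; rewrite !inE mem_rcons in_cons.
have [C /andP [cC Ck]] := circuit_exists HM pG Qk.
have uniqC : forall C', circuit M C' -> C' \subset prefix_set s k -> C' = C.
  by move=> C' cC' sC'; apply: (unique_circuit (e := nth x0 s k.-1) HM Ik1 cC' cC); rewrite -pk.
have fcE : first_circuit M s = C.
  rewrite /first_circuit; case: pickP => [C' /andP [cC' sC'] | none] /=.
    exact: uniqC.
  by move: (none C); rewrite cC Ck.
by rewrite fcE; split => //.
Qed.


Lemma restrict_matroid (T : finType) (M : matroid T) (S : {set T}) :
  is_matroid M -> is_matroid (restrict M S).
Proof.
move=> HM; split => /=.
- by rewrite m_ind0 // sub0set.
- by move=> I /andP [].
- move=> I J JI /andP [II IS]; rewrite (m_her HM JI II) /=; exact: subset_trans JI IS.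
- move=> I J /andP [II IS] /andP [IJ JS] lt.
  have [x xJI Ix] := m_aug HM II IJ lt.
  exists x => //; rewrite Ix /=; apply/subsetP => y; rewrite in_setU1.
  case/orP => [/eqP -> | /(subsetP IS) //].
  by move: xJI; rewrite in_setD => /andP [_ /(subsetP JS)].
Qed.

Lemma circuit_restrict (T : finType) (M : matroid T) (S C : {set T}) :
  S \subset ground M -> circuit (restrict M S) C = circuit M C && (C \subset S).
Proof.
move=> SG; rewrite /circuit /=.
case CS: (C \subset S); last by rewrite /= andbF.
rewrite (subset_trans CS SG) !andbT /=.
congr (_ && _); apply: eq_forallb => x; case xC: (x \in C) => //=.
by rewrite (subset_trans _ CS) ?andbT // subD1set.
Qed.

Lemma index_filter_mono (T : eqType) (a : pred T) (s : seq T) z y :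
  a z -> a y -> index z s <= index y s ->
  index z (filter a s) <= index y (filter a s).
Proof.
move=> az ay; elim: s => [|w s IH] //=.
case: (w =P z) => [-> | /eqP wz] /=.
  by rewrite az /= eqxx.
case: (w =P y) => [<- //| /eqP wy] /=.
rewrite ltnS => /IH; case: (a w) => //=.
by rewrite (negbTE wz) (negbTE wy).
Qed.

Lemma fc_restrict (T : finType) (M : matroid T) (S : {set T}) (s : seq T) :
  is_matroid M -> S \subset ground M -> [set x in s] = ground M ->
  ~~ indep M (ground M) -> first_circuit M s \subset S ->
  first_circuit (restrict M S) (filter (fun x => x \in S) s) = first_circuit M s.
Proof.
move=> HM SG sE GD C0S.
have sG : [set x in s] \subset ground M by rewrite sE.
have sD : ~~ indep M [set x in s] by rewrite sE.
have [k0 ks Ik1 Dk [cC0 C0k uC]] := fc_spec HM sG sD.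
set C0 := first_circuit M s in C0S cC0 C0k uC *.
set s' := filter (fun x => x \in S) s.
set k := first_dep M s in k0 ks Ik1 Dk C0k uC.
have HR := restrict_matroid S HM.
have s'S : [set x in s'] = S.
  apply/setP => x; rewrite inE mem_filter.
  case xS: (x \in S) => //=.
  by have := subsetP SG x xS; rewrite -sE inE.
have s'G : [set x in s'] \subset ground (restrict M S) by rewrite s'S.
have s'D : ~~ indep (restrict M S) [set x in s'].
  rewrite s'S /= subxx andbT; apply/negP => IS.
  by move: cC0 => /and3P [_ /negP []]; apply: m_her HM C0S IS.
have [k0' ks' Ik1' Dk' [cC' C'k uC']] := fc_spec HR s'G s'D.
apply: esym; apply: uC'; first by rewrite circuit_restrict // cC0 C0S.
have P'S : prefix_set s' (first_dep (restrict M S) s') \subset S.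
  apply/subsetP => x; rewrite inE => /mem_take; rewrite mem_filter.
  by case/andP.
case: (boolP (prefix_set s' (first_dep (restrict M S) s') \subset prefix_set s k.-1)) => sub.
  by move: Dk' => /=; rewrite P'S andbT (m_her HM sub Ik1).
move: sub => /subsetPn [y yP' yk].
move: yP'; rewrite inE => yP'.
have ys' := mem_take yP'.
move: (ys'); rewrite mem_filter => /andP [yS ys].
move: yk; rewrite inE (in_take _ ys) -leqNgt => yk.
apply/subsetP => z zC0.
have zk := subsetP C0k z zC0; rewrite inE in zk.
have zs := mem_take zk.
have zS := subsetP C0S z zC0.
have zk1 : index z s <= index y s.
  apply: leq_trans yk; rewrite -ltnS prednK //; exact: index_ltn zk.
have zs' : z \in s' by rewrite mem_filter zS.
rewrite inE (in_take _ zs').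
apply: leq_ltn_trans (index_filter_mono (a := fun x => x \in S) zS yS zk1) _.
exact: index_ltn yP'.
Qed.


Lemma orderings_set (T : finType) (M : matroid T) (s : seq T) :
  s \in orderings M -> [set x in s] = ground M.
Proof.
rewrite /orderings mem_permutations => ps; apply/setP => x.
by rewrite inE (perm_mem ps) mem_enum.
Qed.

Lemma size_orderings (T : finType) (M : matroid T) :
  size (orderings M) = #|ground M|`!.
Proof. by rewrite /orderings size_permutations ?enum_uniq // cardE. Qed.

Lemma count_le_or (T : eqType) (a b c : pred T) (s : seq T) :
  (forall x, x \in s -> a x -> b x || c x) ->
  (count a s <= count b s + count c s)%N.
Proof.
elim: s => [|x s IH] H //=.
have IH' := IH (fun y ys => H y (mem_behead (s := x :: s) ys)).
have Hx := H x (mem_head x s).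
move: Hx; case: (a x); case: (b x); case: (c x) => /= Hx; try lia.
Qed.

Local Open Scope R_scope.

Lemma INR_fact_pos n : 0 < INR (n`!).
Proof. apply: lt_0_INR; apply/ltP; exact: fact_gt0. Qed.

Lemma q_ground (T : finType) (M : matroid T) : q_of (ground M) M = 1.
Proof.
rewrite /q_of /prob_perm.
rewrite (eq_count (a2 := predT)); last first.
  move=> s /=; rewrite /first_circuit; case: pickP => [C /andP [/and3P [] //] |] /=.
  by rewrite sub0set.
rewrite count_predT size_orderings.
have := INR_fact_pos #|ground M|; move=> h; field; lra.
Qed.

Lemma q_empty (T : finType) (M : matroid T) : is_matroid M -> ~~ indep M (ground M) ->
  q_of set0 M = 0.
Proof.
move=> HM GD; rewrite /q_of /prob_perm.
rewrite (eq_in_count (a2 := pred0)); last first.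
  move=> s sO /=; have sE := orderings_set sO.
  have sG : [set x in s] \subset ground M by rewrite sE.
  have sD : ~~ indep M [set x in s] by rewrite sE.
  have [_ _ _ _ [cC _ _]] := fc_spec HM sG sD.
  by rewrite subset0; apply/negbTE; apply: circuit_neq0 cC.
by rewrite count_pred0 /Rdiv Rmult_0_l.
Qed.

Lemma q_diff_le_p (T : finType) (M : matroid T) (S X : {set T}) :
  is_matroid M -> ~~ indep M (ground M) -> S \subset ground M -> X \subset S ->
  q_of S M - q_of (S :\: X) M <= p_of X (restrict M S).
Proof.
move=> HM GD SG XS.
set P := fun t : seq T => first_circuit (restrict M S) t :&: X != set0.
have PF := orderings_filter_count P SG.
set cc := count _ (orderings M) in PF.
have Hle : (count (fun s => first_circuit M s \subset S) (orderings M) <=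
   count (fun s => first_circuit M s \subset S :\: X) (orderings M) + cc)%N.
  apply: count_le_or => s sO CS.
  case: (boolP (first_circuit M s \subset S :\: X)) => //= nsub.
  rewrite /P fc_restrict // ?(orderings_set sO) //.
  move: nsub => /subsetPn [x xC xSX]; apply/set0Pn; exists x.
  rewrite in_setI xC /=; move: xSX; rewrite in_setD (subsetP CS x xC) andbT.
  by move/negbNE.
rewrite /q_of /p_of /prob_perm size_orderings.
rewrite /orderings /= size_permutations ?enum_uniq // -cardE -/(orderings M).
move: Hle PF.
set ca := count _ _; set cb := count _ _; set cP := count _ _.
move=> Hle PF.
have F0 := INR_fact_pos #|ground M|.
have G0 := INR_fact_pos #|S|.
have Hle' : INR ca <= INR cb + INR cc by rewrite -plus_INR; apply: le_INR; apply/leP.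
have PF' : INR cc * INR (#|S|`!) = INR cP * INR (#|ground M|`!) by rewrite -!mult_INR; congr INR; exact: PF.
have -> : INR cP / INR (#|S|`!) = INR cc / INR (#|ground M|`!).
  field_simplify_eq.
    by rewrite -PF' Rmult_comm.
  by split; apply: Rgt_not_eq.
rewrite /Rdiv -Rmult_minus_distr_r; apply: Rmult_le_compat_r.
  by left; apply: Rinv_0_lt_compat.
lra.
Qed.

Local Open Scope R_scope.

Lemma ln_le_sub1 x : 0 < x -> ln x <= x - 1.
Proof. move=> hx; have := exp_ineq1_le (ln x); rewrite exp_ln //; lra. Qed.

Lemma ln2_lt : ln 2 < 9/10.
Proof.
have h1 : 1 + 9/20 < exp (9/20) by apply: exp_ineq1; lra.
have h2 : exp (9/10) = exp (9/20) * exp (9/20) by rewrite -exp_plus; f_equal; lra.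
have h3 : 2 < exp (9/10).
  rewrite h2; have h4 : 29/20 * (29/20) <= exp (9/20) * exp (9/20).
    apply: Rmult_le_compat; lra.
  lra.
rewrite -[X in _ < X](ln_exp (9/10)); apply: ln_increasing => //; lra.
Qed.

Lemma ln_div x y : 0 < x -> 0 < y -> ln (x / y) = ln x - ln y.
Proof.
move=> hx hy; rewrite /Rdiv ln_mult ?ln_Rinv //; exact: Rinv_0_lt_compat.
Qed.

Lemma INR_expn2 k : INR (2 ^ k)%N = 2 ^ k.
Proof.
elim: k => [|k IH] //=; rewrite expnS -multE mult_INR IH //.
Qed.

Lemma prob_ge0 (T : finType) (M : matroid T) (P : seq T -> bool) : 0 <= prob_perm M P.
Proof.
rewrite /prob_perm /Rdiv; apply: Rmult_le_pos; first exact: pos_INR.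
left; apply: Rinv_0_lt_compat; rewrite /orderings size_permutations ?enum_uniq //.
exact: INR_fact_pos.
Qed.

Lemma big_n_facts (nr : R) : 2 ^ 30 <= nr ->
  [/\ 1 <= log2 nr, ln nr / log2 nr = ln 2 & 2 ^ 22 * log2 nr <= nr].
Proof.
move=> hn.
have l2 := ln_lt_2; have l2' := ln2_lt.
have p30 : 2 ^ 30 = 1073741824 by simpl; lra.
have p22 : 2 ^ 22 = 4194304 by simpl; lra.
rewrite p30 in hn; rewrite p22.
have npos : 0 < nr by lra.
have lnn : ln 2 <= ln nr.
  case: (Req_dec nr 2) => [-> | ne]; first lra.
  left; apply: ln_increasing; lra.
have L1 : 1 <= log2 nr.
  rewrite /log2; apply/(Rmult_le_reg_r (ln 2)); first lra.
  rewrite /Rdiv Rmult_assoc Rinv_l; lra.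
split => //.
  rewrite /log2; field; split; lra.
have hdiv : ln (nr / 1073741824) <= nr / 1073741824 - 1 by apply: ln_le_sub1; apply: Rdiv_lt_0_compat; lra.
rewrite ln_div in hdiv; try lra.
have e30 : ln 1073741824 = 30 * ln 2.
  rewrite -p30 ln_pow; [simpl; lra | lra].
rewrite e30 in hdiv.
have hL : log2 nr * ln 2 = ln nr by rewrite /log2; field; lra.
have hL2 : log2 nr <= 2 * ln nr.
  apply: (Rmult_le_reg_r (ln 2)); first lra.
  rewrite hL. nra.
lra.
Qed.

Local Open Scope R_scope.

Lemma abs_bounds x e : Rabs x <= e -> - e <= x /\ x <= e.
Proof.
move=> h; split; last by apply: Rle_trans (Rle_abs x) h.
have := Rle_abs (- x); rewrite Rabs_Ropp; lra.
Qed.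

Lemma inv_reach (T : finType) (M : matroid T) (qhat : {set T} -> R) :
  is_matroid M -> ~~ indep M (ground M) ->
  8 <= INR #|ground M| -> 1 <= log2 (INR #|ground M|) ->
  ln (INR #|ground M|) / log2 (INR #|ground M|) < 1 ->
  (forall X : {set T}, X \subset ground M ->
     Rabs (qhat X - q_of X M) <= / (INR #|ground M|) ^ 2) ->
  forall S, reachable #|ground M| qhat (ground M) S ->
  [/\ S \subset ground M, S != set0 &
      1 - (ln (INR #|ground M|) - ln (INR #|S|)) / (2 ^ 20 * log2 (INR #|ground M|))
        - 2 * (INR #|ground M| - INR #|S|) / (INR #|ground M|) ^ 2 <= q_of S M].
Proof.
move=> HM GD hn8 hL1 hlnL Hq.
set nr := INR #|ground M| in hn8 hL1 hlnL Hq *; set L := log2 nr in hL1 hlnL *.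
have npos : 0 < nr by lra.
have DLpos : 0 < 2 ^ 20 * L by apply: Rmult_lt_0_compat; [apply: pow_lt; lra | lra].
move=> S0; elim=> [|S X reachS [SG SN Hinv] [XS XN Hrem]].
  split => //.
  - apply: contraNneq GD => ->; exact: m_ind0.
  - rewrite q_ground /Rminus !Rplus_opp_r /Rdiv !Rmult_0_l Rmult_0_r; lra.
have SXG : S :\: X \subset ground M by apply: subset_trans SG; apply: subsetDl.
have HqS := Hq S SG; have HqSX := Hq _ SXG.
set e := / nr ^ 2 in HqS HqSX *.
have epos : 0 < e by apply: Rinv_0_lt_compat; apply: pow_lt.
set s := #|S| in Hinv Hrem *; set t := #|X| in Hrem *.
have cSX : #|S :\: X| = (s - t)%N.
  by rewrite cardsD (setIidPr XS).
have t1 : (1 <= t)%N by rewrite /t card_gt0.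
have ts : (t <= s)%N by rewrite /t /s subset_leq_card.
have s1 : (1 <= s)%N by rewrite /s card_gt0.
have sle : INR s <= nr by apply: le_INR; apply/leP; rewrite /s subset_leq_card.
have rs1 : 1 <= INR s by apply: (le_INR 1); apply/leP.
have rt1 : 1 <= INR t by apply: (le_INR 1); apply/leP.
have rts : INR t <= INR s by apply: le_INR; apply/leP.
have [qS1 qS2] := abs_bounds HqS.
have [qX1 qX2] := abs_bounds HqSX.
rewrite -/L in Hrem.
set a := / (2 ^ 20 * L).
have apos : 0 < a by apply: Rinv_0_lt_compat.
have hD : 0 < 2 ^ 20 by apply: pow_lt; lra.
have haL : ln nr * a < / 2 ^ 20.
  have -> : ln nr * a = (ln nr / L) * / 2 ^ 20 by rewrite /a; field; lra.
  have := Rinv_0_lt_compat _ hD; nra.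
have ha : a <= / 2 ^ 20.
  rewrite /a Rinv_mult; have := Rinv_0_lt_compat _ hD => h.
  have : / L <= 1 by rewrite -Rinv_1; apply: Rinv_le_contravar; lra.
  nra.
have hrem : qhat S - qhat (S :\: X) <= INR t / INR s * a.
  by rewrite (_ : INR t / INR s * a = INR t / (2 ^ 20 * INR s * L)) // /a; field; lra.
have hne : nr * e = / nr by rewrite /e; field; lra.
have hne8 : / nr <= / 8 by apply: Rinv_le_contravar; lra.
have lns0 : 0 <= ln (INR s).
  case: (Req_dec (INR s) 1) => [-> | ne]; first by rewrite ln_1; lra.
  rewrite -ln_1; left; apply: ln_increasing; lra.
rewrite /Rdiv -/a -/e in Hinv *.
have hts : 0 <= INR t / INR s by apply: Rmult_le_pos; [lra | left; apply: Rinv_0_lt_compat; lra].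
case: (boolP (s - t == 0)%N) => [st0 | st0].
  have SX0 : S :\: X = set0 by apply/eqP; rewrite -cards_eq0 cSX.
  rewrite SX0 q_empty // in qX1 qX2.
  have tse : t = s by apply/eqP; rewrite eqn_leq ts -subn_eq0.
  rewrite tse in hrem; rewrite /Rdiv Rinv_r in hrem; last lra.
  have h1 : ln (INR s) * a >= 0 by nra.
  have h2 : (nr - INR s) * e <= nr * e by nra.
  have h3 : e <= / 8 * / 8.
    have -> : e = / nr * / nr by rewrite /e; field; lra.
    have := Rinv_0_lt_compat _ npos; nra.
  rewrite SX0 in hrem.
  exfalso; nra.
have st1 : (1 <= s - t)%N by rewrite lt0n.
have ru1 : 1 <= INR (s - t) by apply: (le_INR 1); apply/leP.
rewrite cSX; rewrite minus_INR in ru1 *; last exact/leP.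
split => //.
  by apply: contraNneq st0 => SX0; rewrite -cSX SX0 cards0.
have hln : INR t / INR s <= ln (INR s) - ln (INR s - INR t).
  have := ln_le_sub1 (x := (INR s - INR t) / INR s) ltac:(apply: Rdiv_lt_0_compat; lra).
  rewrite ln_div; try lra.
  have -> : (INR s - INR t) / INR s - 1 = - (INR t / INR s) by field; lra.
  lra.
have k1 : INR t / INR s * a <= (ln (INR s) - ln (INR s - INR t)) * a by nra.
have k2 : e <= INR t * e by nra.
nra.
Qed.

Local Open Scope R_scope.

Theorem mainTheorem6 :
  exists N : nat, forall (T : finType) (M : matroid T),
    is_matroid M -> ~~ indep M (ground M) ->
    (N <= #|ground M|)%N ->
    forall qhat : {set T} -> R,
      (forall X : {set T}, X \subset ground M ->
         Rle (Rabs (Rminus (qhat X) (q_of X M)))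
             (Rinv (pow (INR #|ground M|) 2))) ->
      forall S : {set T}, procedure_output #|ground M| qhat (ground M) S ->
        S != set0 /\ globally_optimal M S.
Proof.
exists (2 ^ 30)%N => T M HM GD HN qhat Hq S [reachS stop].
have hn : (2 ^ 30 <= INR #|ground M|)%R.
  by rewrite -INR_expn2; apply: le_INR; apply/leP.
have [hL1 hlnL hL22] := big_n_facts hn.
have l2 := ln_lt_2; have l2' := ln2_lt.
have p30 : (2 ^ 30 = 1073741824)%R by simpl; lra.
have p22 : (2 ^ 22 = 4194304)%R by simpl; lra.
have p20 : (2 ^ 20 = 1048576)%R by simpl; lra.
have p21 : (2 ^ 21 = 2097152)%R by simpl; lra.
have hn8 : (8 <= INR #|ground M|)%R by lra.
have hlnL1 : (ln (INR #|ground M|) / log2 (INR #|ground M|) < 1)%R by lra.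
have [SG SN Hinv] := inv_reach HM GD hn8 hL1 hlnL1 Hq reachS.
split => //.
set nr := INR #|ground M| in hn hL1 hlnL hL22 hn8 hlnL1 Hinv Hq *.
set L := log2 nr in hL1 hlnL hL22 hlnL1 Hinv *.
have npos : 0 < nr by lra.
set e := / nr ^ 2 in Hq Hinv *.
have epos : 0 < e by apply: Rinv_0_lt_compat; apply: pow_lt.
have hne : nr * e = / nr by rewrite /e; field; lra.
have hinv_nr : / nr <= / 1073741824 by apply: Rinv_le_contravar; lra.
have hD : 0 < 2 ^ 20 by apply: pow_lt; lra.
have DLpos : 0 < 2 ^ 20 * L by apply: Rmult_lt_0_compat; lra.
set s := #|S| in Hinv *.
have s1 : (1 <= s)%N by rewrite /s card_gt0.
have rs1 : 1 <= INR s by apply: (le_INR 1); apply/leP.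
have sle : INR s <= nr by apply: le_INR; apply/leP; rewrite /s subset_leq_card.
have lns0 : 0 <= ln (INR s).
  case: (Req_dec (INR s) 1) => [-> | ne]; first by rewrite ln_1; lra.
  rewrite -ln_1; left; apply: ln_increasing; lra.
split.
  rewrite /Rdiv in Hinv.
  set a := / (2 ^ 20 * L) in Hinv.
  have apos : 0 < a by apply: Rinv_0_lt_compat.
  have haL : ln nr * a = ln 2 * / 2 ^ 20.
    rewrite /a -hlnL /L; field; rewrite -/L; lra.
  have h1 : ln (INR s) * a >= 0 by nra.
  have h2 : (nr - INR s) * e <= nr * e by nra.
  rewrite p20 in haL *.
  have E1 : (ln nr - ln (INR s)) * a <= 9 / 10 * / 1048576.
    rewrite Rmult_minus_distr_r haL.
    have : ln 2 * / 1048576 <= 9 / 10 * / 1048576.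
      apply: Rmult_le_compat_r; [left; apply: Rinv_0_lt_compat|]; lra.
    lra.
  have E2 : 2 * (nr - INR s) * e <= 2 * / 1073741824.
    have : (nr - INR s) * e <= nr * e by nra.
    lra.
  rewrite -/e in Hinv; apply: Rle_ge; lra.
move=> X XS.
case: (boolP (X == set0)) => [/eqP -> | XN].
  rewrite cards0 /Rdiv Rmult_0_l; apply: Rle_ge; exact: prob_ge0.
have nrem := stop X.
set t := #|X| in nrem *.
have t1 : (1 <= t)%N by rewrite /t card_gt0.
have rt1 : 1 <= INR t by apply: (le_INR 1); apply/leP.
have hB : INR t / (2 ^ 20 * INR s * L) < qhat S - qhat (S :\: X).
  apply: Rnot_le_lt => h; apply: nrem; split => //.
have SXG : S :\: X \subset ground M by apply: subset_trans SG; apply: subsetDl.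
have [qS1 qS2] := abs_bounds (Hq S SG).
have [qX1 qX2] := abs_bounds (Hq _ SXG).
have hp := q_diff_le_p HM GD SG XS.
set B := INR t / (2 ^ 20 * INR s * L) in hB.
have DsL : 0 < 2 ^ 20 * INR s * L by apply: Rmult_lt_0_compat; [apply: Rmult_lt_0_compat|]; lra.
have K : 4 * e * (2 ^ 20 * INR s * L) <= INR t.
  have k1 : 4 * e * (2 ^ 20 * INR s * L) <= 4 * e * (2 ^ 20 * nr * L).
    apply: Rmult_le_compat_l; first lra.
    apply: Rmult_le_compat_r; first lra.
    apply: Rmult_le_compat_l; lra.
  have k2 : 4 * e * (2 ^ 20 * nr * L) = (4 * 2 ^ 20 * L) * / nr by rewrite -hne; ring.
  have k3 : (4 * 2 ^ 20 * L) * / nr <= 1.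
    apply: (Rmult_le_reg_r nr) => //; rewrite Rmult_assoc Rinv_l; last lra.
    rewrite p20 in hD *; rewrite p22 in hL22; lra.
  lra.
have K2 : 4 * e <= B.
  rewrite /B; apply: (Rmult_le_reg_r (2 ^ 20 * INR s * L)) => //.
  have -> : INR t / (2 ^ 20 * INR s * L) * (2 ^ 20 * INR s * L) = INR t by field; lra.
  lra.
have -> : INR t / (2 ^ 21 * INR s * L) = B / 2 by rewrite /B p21 p20; field; lra.
apply: Rle_ge; lra.
Qed.
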